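(* Let $m\ge2$ be an integer and let $a,b,c,d$ be complex roots of unity. Then $$1-\frac{(a+b)(c+d)}{m}-\frac{abcd}{m^2}\neq0.$$ *)

(* Defs.v *)
From mathcomp Require Import all_boot all_algebra all_field.
Set Implicit Arguments. Unset Strict Implicit. Unset Printing Implicit Defensive.
Import GRing.Theory Num.Theory.
Local Open Scope ring_scope.

(* A complex root of unity: z^n = 1 for some positive n. Complex numbers are
   modelled by algC (roots of unity are algebraic, so this loses nothing). *)
Definition is_root_of_unity (z : algC) : Prop := exists2 n : nat, (0 < n)%N & z ^+ n = 1.

(* Main.v *)
Require Import Defs.
From mathcomp Require Import all_boot all_algebra all_field.
From mathcomp Require Import ring.
Import GRing.Theory Num.Theory.
Local Open Scope ring_scope.

Lemma rou_aint (z : algC) : is_root_of_unity z ->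
  z \in Aint /\ exists w, w \in Aint /\ w * z = 1.
Proof.
case=> n n0 zn.
have zA : z \in Aint by apply: (Aint_unity_root n0); rewrite unity_rootE zn.
split=> //; exists (z ^+ n.-1); split; first exact: rpredX.
by rewrite -exprSr prednK.
Qed.

Theorem lemma7p3 (m : nat) (a b c d : algC) :
  (2 <= m)%N ->
  is_root_of_unity a -> is_root_of_unity b ->
  is_root_of_unity c -> is_root_of_unity d ->
  1 - (a + b) * (c + d) / m%:R - (a * b * c * d) / (m%:R ^+ 2) != 0.
Proof.
move=> m2 /rou_aint[aA [a' [a'A ha]]] /rou_aint[bA [b' [b'A hb]]]
  /rou_aint[cA [c' [c'A hc]]] /rou_aint[dA [d' [d'A hd]]].
apply/negP => /eqP E.
have m0 : (m%:R : algC) != 0 by rewrite pnatr_eq0 -lt0n (leq_trans _ m2).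
set u := a * b * c * d.
have Hm : m%:R - (a + b) * (c + d) = u / m%:R.
  apply: (mulIf m0).
  have : (1 - (a + b) * (c + d) / m%:R - u / m%:R ^+ 2) * m%:R ^+ 2 = 0
    by rewrite E mul0r.
  move=> H; apply/eqP; rewrite -subr_eq0; apply/eqP; rewrite -H.
  by field.
have Hi : (m%:R : algC)^-1 = a' * b' * c' * d' * (m%:R - (a + b) * (c + d)).
  rewrite Hm /u.
  have -> : a' * b' * c' * d' * (a * b * c * d / m%:R)
           = (a' * a) * (b' * b) * (c' * c) * (d' * d) / m%:R by ring.
  by rewrite ha hb hc hd !mul1r.
have iA : (m%:R : algC)^-1 \in Aint.
  rewrite Hi; apply: rpredM; first by rewrite !rpredM.
  by apply: rpredB; [apply: Aint_Cnat; apply: rpred_nat | rewrite !(rpredD, rpredM)].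
have iQ : (m%:R : algC)^-1 \in Crat by rewrite rpredV rpred_nat.
have iZ := Cint_rat_Aint iQ iA.
have iN : (m%:R : algC)^-1 \in Num.nat by rewrite natrEint iZ invr_ge0 ler0n.
case/natrP: iN => k hk.
have : ((k * m)%:R : algC) = 1%:R by rewrite natrM -hk mulVf.
move/eqP; rewrite eqr_nat => /eqP km.
by move: km m2 => /eqP; rewrite muln_eq1 => /andP[_ /eqP ->].
Qed.
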